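(* Let $N$ be a normal subgroup of a finite group $G$ and let $\eta^*(N)$ be the number of $G$-orbits on the set of $N$-conjugacy classes of maximal cyclic subgroups of $N$. Then $\eta(G) \ge \eta^*(N)$. In particular: (i) if $N$ is central in $G$, then $\eta(G) \ge \eta(N)$; (ii) if $|G:N| = k$, then $\eta(G) \ge \eta(N)/k$.
   Context: A cyclic subgroup $C$ of a finite group $G$ is maximal cyclic if there is no cyclic subgroup $D$ of $G$ with $C < D$. $\eta(G)$ denotes the number of conjugacy classes of maximal cyclic subgroups of $G$. *)

(* Defs.v *)
From HB Require Import structures.
From mathcomp Require Import all_boot all_order all_algebra all_fingroup all_solvable.
Set Implicit Arguments. Unset Strict Implicit. Unset Printing Implicit Defensive.
Import GRing.Theory Num.Theory.

Local Open Scope group_scope.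

Section MaxCyclic.
Variable gT : finGroupType.

Definition maxcyclic (G : {set gT}) : {set {group gT}} :=
  [set C : {group gT} | [max C | (C \subset G) && cyclic C]].

Definition eta (G : {group gT}) : nat :=
  #|orbit 'JG G @: maxcyclic G|.

Definition Nclasses_maxcyclic (N : {group gT}) : {set {set {group gT}}} :=
  orbit 'JG N @: maxcyclic N.

Definition eta_star (G N : {group gT}) : nat :=
  #|orbit ('JG)^* G @: Nclasses_maxcyclic N|.

End MaxCyclic.

(* Main.v *)
Require Import Defs.
From mathcomp Require Import all_boot all_order all_algebra all_fingroup all_solvable.
Import GRing.Theory Num.Theory.
Local Open Scope group_scope.

Lemma card_imset_factor (T U V : finType) (S : {set T}) (f : T -> U) (g : T -> V) :
  {in S &, forall x y, g x = g y -> f x = f y} -> #|f @: S| <= #|g @: S|.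
Proof.
move=> H.
case: (set_0Vmem S) => [->|[x0 x0S]]; first by rewrite !imset0 cards0.
pose h O := if [pick x in S | g x == O] is Some x then f x else f x0.
have: f @: S \subset h @: (g @: S).
  apply/subsetP => _ /imsetP[x xS ->]; apply/imsetP; exists (g x).
    exact: imset_f.
  rewrite /h; case: pickP => [y /andP[yS /eqP gy]| /(_ x)].
    by rewrite (H y x).
  by rewrite xS eqxx.
move/subset_leq_card => le; exact: leq_trans le (leq_imset_card _ _).
Qed.

Lemma orbit_conj_normal (gT : finGroupType) (N : {group gT}) (D : {group gT}) g :
  g \in 'N(N) ->
  orbit 'JG N ('JG%act D g) = ('JG)^*%act (orbit 'JG N D) g.
Proof.
move=> nNg; apply/setP => Y.
rewrite -{1}(actKV 'JG g Y) -{1}(normP nNg) orbit_conjsg.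
apply/idP/idP => [H|].
  by rewrite -(actKV 'JG g Y); apply: mem_setact.
by case/imsetP => Z ZX ->; rewrite actK.
Qed.

Lemma card_bigcup_le (T I : finType) (P : {set I}) (F : I -> {set T}) :
  #|\bigcup_(i in P) F i| <= \sum_(i in P) #|F i|.
Proof.
elim/big_rec2: _ => [|i B n _ IH]; first by rewrite cards0.
apply: leq_trans (leq_card_setU _ _).1 _; by rewrite leq_add2l.
Qed.

Section Main.
Variables (gT : finGroupType) (G N : {group gT}).
Hypothesis nsNG : N <| G.

Lemma maxcyc_ext (D : {group gT}) : D \in maxcyclic N ->
  exists2 C : {group gT}, C \in maxcyclic G & D = (C :&: N)%G.
Proof.
case/andP: nsNG => sNG nNG.
rewrite inE => /maxgroupP[/andP[sDN cD] maxD].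
have gPD : (fun C : {group gT} => (C \subset G) && cyclic C) D.
  by rewrite /= (subset_trans sDN sNG) cD.
have [C maxC sDC] := @maxgroup_exists _ (fun C : {group gT} => (C \subset G) && cyclic C) D gPD.
exists C; first by rewrite inE.
have [/andP[sCG cC] _] := maxgroupP maxC.
apply: val_inj => /=; symmetry; apply: maxD.
  by rewrite subsetIr (cyclicS (subsetIl _ _) cC).
by rewrite subsetI sDC sDN.
Qed.

Lemma part1 : eta_star G N <= eta G.
Proof.
case/andP: nsNG => sNG nNG.
pose psi (C : {group gT}) := orbit 'JG^* G (orbit 'JG N (C :&: N)%G).
have sub : orbit 'JG^* G @: Nclasses_maxcyclic N \subset psi @: maxcyclic G.
  apply/subsetP => _ /imsetP[X /imsetP[D DN ->] ->].
  have [C CG ->] := maxcyc_ext _ DN; exact: imset_f.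
apply: leq_trans (subset_leq_card sub) _.
rewrite /eta; apply: card_imset_factor => C C' _ _ eqO.
have : C' \in orbit 'JG G C by rewrite eqO orbit_refl.
case/orbitP => g gG <-.
have nNg : g \in 'N(N) := subsetP nNG g gG.
rewrite /psi; have -> : (('JG%act C g) :&: N)%G = 'JG%act (C :&: N)%G g.
  by apply: val_inj => /=; rewrite conjIg (normP nNg).
by rewrite orbit_conj_normal // orbit_act.
Qed.

Lemma orbit_central X : N \subset 'Z(G) -> X \in Nclasses_maxcyclic N ->
  orbit 'JG^* G X = [set X].
Proof.
move=> sNZ /imsetP[D /[!inE] /maxgroupP[/andP[sDN _] _] ->].
have fix1 : forall g, g \in G -> 'JG^*%act (orbit 'JG N D) g = orbit 'JG N D.
  move=> g gG; have -> : 'JG^*%act (orbit 'JG N D) g = [set 'JG%act Y g | Y in orbit 'JG N D] by [].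
  rewrite -[RHS]imset_id; apply: eq_in_imset => Y.
  case/orbitP => n nN <-; apply: val_inj => /=.
  have sDnN : D :^ n \subset N by rewrite -(conjGid nN) conjSg.
  apply/normP; apply: (subsetP (cent_sub _)); apply: (subsetP _ g gG).
  rewrite centsC; apply: subset_trans sDnN (subset_trans sNZ _).
  exact: subsetIr.
apply/setP => Y; rewrite inE; apply/imsetP/eqP => [[g gG ->]|->].
  exact: fix1.
by exists 1; rewrite ?group1 ?act1.
Qed.

Lemma part2 : N \subset 'Z(G) -> eta N <= eta G.
Proof.
move=> sNZ; apply: leq_trans part1; rewrite /eta_star.
rewrite (eq_in_imset (g := set1) (fun X XN => orbit_central _ sNZ XN)).
by rewrite card_imset //; exact: set1_inj.
Qed.

Lemma part3_nat : eta N <= eta_star G N * #|G : N|.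
Proof.
case/andP: nsNG => sNG nNG.
set Orb := orbit 'JG^* G @: Nclasses_maxcyclic N.
have sub : Nclasses_maxcyclic N \subset \bigcup_(O in Orb) O.
  apply/subsetP => X XN; apply/bigcupP; exists (orbit 'JG^* G X).
    exact: imset_f.
  exact: orbit_refl.
rewrite /eta; apply: leq_trans (subset_leq_card sub) _.
apply: leq_trans (card_bigcup_le _ _ Orb (fun O => O)) _.
rewrite /eta_star -sum_nat_const; apply: leq_sum => _ /imsetP[X /imsetP[D _ ->] ->].
rewrite card_orbit; apply: dvdn_leq; first exact: indexg_gt0.
apply: indexgS; rewrite subsetI sNG; apply/subsetP => n nN; apply/astab1P.
by rewrite -orbit_conj_normal ?orbit_act //; exact: (subsetP (normG N)) n nN.
Qed.

End Main.

Theorem proposition2p3 (gT : finGroupType) (G N : {group gT}) :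
  N <| G ->
  [/\ eta_star G N <= eta G,
      (N \subset 'Z(G) -> eta N <= eta G)
    & forall k : nat, #|G : N| = k ->
        ((eta N)%:R / k%:R <= (eta G)%:R :> rat)%R].
Proof.
move=> nsNG; split; first exact: part1.
  exact: part2.
move=> k <-.
rewrite ler_pdivrMr ?ltr0n ?indexg_gt0 // -natrM ler_nat.
apply: leq_trans (part3_nat _ _ _ nsNG) _.
by rewrite leq_mul2r (part1 _ _ _ nsNG) orbT.
Qed.
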